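(* Let $D = \bigcup_{k=0}^{5} IPE_k$ be the set of available frequencies, where $IPE_0=\{40000,40070,40140\}$, $IPE_1=\{41000,41070,41140\}$, $IPE_2=\{42000,42070,42140\}$, $IPE_3=\{43000,43070,43140\}$, $IPE_4=\{44000,44070,44140,44210\}$, $IPE_5=\{45000,45070,45140,45210\}$. Let $s$ be a site with exactly 8 transmission paths (paths leaving $s$) and 8 reception paths (paths arriving at $s$), and suppose frequencies $f(t)\in D$ are assigned to these 16 paths such that: (i) any two transmission paths of $s$ satisfy $|f(t)-f(t')|\ge 100$; (ii) any transmission path $t$ and reception path $t'$ of $s$ satisfy $|f(t)-f(t')|\ge 220$; (iii) the 8 reception paths of $s$ receive pairwise distinct frequencies. Then every transmission path of $s$ receives a frequency in $\{40000, 40140, 41000, 41140, 42000, 42140, 43000, 43140\}$, and every reception path of $s$ receives a frequency in $\{44000, 44070, 44140, 44210, 45000, 45070, 45140, 45210\}$.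
   Context: Frequency assignment for a radio network: each link between two sites consists of two paths (one per direction); a path from site $s$ is a transmission path of $s$, a path to site $s$ is a reception path of $s$. Constraints between paths incident to the same site (''co-site'' constraints) impose minimum frequency gaps: 100 between two transmitters, 220 between a transmitter and a receiver, and a (small, positive) gap between two receivers. The six sets $IPE_k$ are called inter-planes; $IPE_0,\dots,IPE_3$ are ''small'' (3 frequencies) and $IPE_4,IPE_5$ are ''large'' (4 frequencies). A site with 8 links is called a $Cart8$ site. *)

(* Defs.v *)
From mathcomp Require Import all_boot all_order all_algebra.
Set Implicit Arguments. Unset Strict Implicit. Unset Printing Implicit Defensive.

Definition IPE0 : seq nat := [:: 40000; 40070; 40140].
Definition IPE1 : seq nat := [:: 41000; 41070; 41140].
Definition IPE2 : seq nat := [:: 42000; 42070; 42140].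
Definition IPE3 : seq nat := [:: 43000; 43070; 43140].
Definition IPE4 : seq nat := [:: 44000; 44070; 44140; 44210].
Definition IPE5 : seq nat := [:: 45000; 45070; 45140; 45210].

Definition D : seq nat := IPE0 ++ IPE1 ++ IPE2 ++ IPE3 ++ IPE4 ++ IPE5.

Definition fdist (a b : nat) : int := `|(a%:Z - b%:Z)%R|%R.

Definition Tfreqs : seq nat :=
  [:: 40000; 40140; 41000; 41140; 42000; 42140; 43000; 43140].
Definition Rfreqs : seq nat :=
  [:: 44000; 44070; 44140; 44210; 45000; 45070; 45140; 45210].

(* Main.v *)
Require Import Defs.
From mathcomp Require Import all_boot all_order all_algebra zify.
Import Order.TTheory GRing.Theory Num.Theory.

Lemma fdistE (c a b : nat) : (c%:Z <= fdist a b)%R = (c + a <= b) || (c + b <= a).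
Proof.
rewrite /fdist; apply/idP/orP.
  move=> H; lia.
case=> H; lia.
Qed.

Definition blk (k : nat) : nat :=
  if k < 3 then 0 else if k < 6 then 1 else if k < 9 then 2
  else if k < 12 then 3 else if k < 16 then 4 else 5.
Definition off (k : nat) : nat :=
  if k < 3 then k else if k < 6 then k - 3 else if k < 9 then k - 6
  else if k < 12 then k - 9 else if k < 16 then k - 12 else k - 16.
Definition spI (k l : nat) : bool :=
  (blk k != blk l) || (2 <= off k - off l) || (2 <= off l - off k).
Definition farI (k l : nat) : bool := blk k != blk l.

Lemma tables_ok : all (fun k => all (fun l =>
  (((100 + nth 0 D k <= nth 0 D l) || (100 + nth 0 D l <= nth 0 D k)) == spI k l) &&
  (((220 + nth 0 D k <= nth 0 D l) || (220 + nth 0 D l <= nth 0 D k)) == farI k l))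
  (iota 0 20)) (iota 0 20).
Proof. vm_compute. reflexivity. Qed.

Fixpoint gen (n lo : nat) (pre : seq nat) : seq (seq nat) :=
  match n with
  | 0 => [:: [::]]
  | n'.+1 => flatten [seq [seq k :: t | t <- gen n' k.+1 (k :: pre)]
                     | k <- [seq k <- iota lo (20 - lo) | all (fun a => spI a k) pre]]
  end.

Lemma gen_complete n lo pre s : sorted ltn s -> all (fun k => lo <= k < 20) s ->
  pairwise spI s -> all (fun x => all (fun a => spI a x) pre) s ->
  size s = n -> s \in gen n lo pre.
Proof.
elim: s n lo pre => [|k t IH] [|n] lo pre //=.
move=> Hs /andP[/andP[Hlo Hk] Ht] /andP[Hsk Hpw] /andP[Hpk Hpt] [Hn].
apply/flatten_mapP; exists k.
  rewrite mem_filter Hpk mem_iota /=; apply/andP; split => //; lia.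
apply: map_f; apply: IH => //.
- exact: path_sorted Hs.
- have : all (ltn k) t by apply: (order_path_min (@ltn_trans)) Hs.
  move: Ht; elim: t {Hs Hsk Hpw Hn Hpt} => //= a t IHt /andP[/andP[_ Ha] Ht] /andP[Hka Hkt].
  by rewrite Hka Ha /= IHt.
- apply/allP => x Hx /=; rewrite (allP Hsk x Hx) /=; exact: (allP Hpt x Hx).
Qed.

Lemma pw_of s : sorted ltn s ->
  all (fun a => all (fun b => (a == b) || spI a b) s) s -> pairwise spI s.
Proof.
rewrite sorted_pairwise; last exact: ltn_trans.
elim: s => //= k t IH /andP[Hlt Hpw] /andP[/andP[_ Hk] Ht].
apply/andP; split.
  apply/allP => b Hb; have := allP Hk b Hb; have := allP Hlt b Hb.
  by move=> /ltn_eqF ->.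
apply: IH => //; apply/allP => a Ha; have := allP Ht a Ha.
by case/andP.
Qed.

Definition target : seq nat := [:: 0; 2; 3; 5; 6; 8; 9; 11].

Definition goodS (s : seq nat) : bool :=
  all (fun a => all (fun b => (a == b) || spI a b) s) s ==>
  (8 <= count (fun l => all (fun k => farI k l) s) (iota 0 20)) ==>
  (s == target).

Lemma gen_check : all goodS (gen 8 0 [::]).
Proof. vm_compute. reflexivity. Qed.

Lemma target_T : all (fun k => nth 0 D k \in Tfreqs) target.
Proof. vm_compute. reflexivity. Qed.

Lemma target_R : all (fun l => all (fun k => farI k l) target ==> (nth 0 D l \in Rfreqs)) (iota 0 20).
Proof. vm_compute. reflexivity. Qed.

Theorem mainTheorem1 (ft fr : 'I_8 -> nat)
  (HDt : forall i, ft i \in D) (HDr : forall j, fr j \in D)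
  (Htt : forall i i' : 'I_8, i != i' -> (100 <= fdist (ft i) (ft i'))%R)
  (Htr : forall i j : 'I_8, (220 <= fdist (ft i) (fr j))%R)
  (Hrr : injective fr) :
  (forall i, ft i \in Tfreqs) /\ (forall j, fr j \in Rfreqs).
Proof.
have sD : size D = 20 by [].
have [ti Eti Lti] : exists2 ti : 'I_8 -> nat,
    (forall i, nth 0 D (ti i) = ft i) & (forall i, ti i < 20).
  by exists (fun i => index (ft i) D) => i; rewrite ?nth_index // -sD index_mem.
have [ri Eri Lri] : exists2 ri : 'I_8 -> nat,
    (forall j, nth 0 D (ri j) = fr j) & (forall j, ri j < 20).
  by exists (fun j => index (fr j) D) => j; rewrite ?nth_index // -sD index_mem.
have TB k l : k < 20 -> l < 20 ->
    ((100 <= fdist (nth 0 D k) (nth 0 D l))%R = spI k l) /\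
    ((220 <= fdist (nth 0 D k) (nth 0 D l))%R = farI k l).
  move=> Hk Hl; rewrite !fdistE.
  have H1 : k \in iota 0 20 by rewrite mem_iota.
  have H2 : l \in iota 0 20 by rewrite mem_iota.
  by case/andP: (allP (allP tables_ok k H1) l H2) => /eqP -> /eqP ->.
have Sp i i' : i != i' -> spI (ti i) (ti i').
  move=> H; have [<- _] := TB _ _ (Lti i) (Lti i'); rewrite !Eti; exact: Htt.
have Fr i j : farI (ti i) (ri j).
  have [_ <-] := TB _ _ (Lti i) (Lri j); rewrite Eti Eri; exact: Htr.
have spirr a : spI a a = false by rewrite /spI eqxx subnn.
pose t0 := [seq ti i | i <- enum 'I_8].
pose r0 := [seq ri j | j <- enum 'I_8].
pose s := sort leq t0.
have Ps : perm_eq s t0 by rewrite perm_sort.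
have inj_ti : injective ti.
  move=> i i' E; apply/eqP; apply/negPn/negP => /Sp; by rewrite E spirr.
have inj_ri : injective ri.
  by move=> j j' E; apply: Hrr; rewrite -Eri E Eri.
have Ut0 : uniq t0 by rewrite map_inj_uniq ?enum_uniq.
have Ur0 : uniq r0 by rewrite map_inj_uniq ?enum_uniq.
have Hall : all (fun a => all (fun b => (a == b) || spI a b) s) s.
  rewrite (perm_all _ Ps); apply/allP => a /mapP[i _ ->].
  rewrite (perm_all _ Ps); apply/allP => b /mapP[i' _ ->].
  by case: (eqVneq i i') => [->|H]; rewrite ?eqxx // Sp ?orbT.
have Ssort : sorted ltn s.
  by rewrite ltn_sorted_uniq_leq sort_uniq Ut0 sort_sorted //; exact: leq_total.
have Sgen : s \in gen 8 0 [::].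
  apply: gen_complete => //.
  - rewrite (perm_all _ Ps); apply/allP => x /mapP[i _ ->]; exact: Lti.
  - exact: pw_of.
  - by apply/allP.
  - by rewrite (perm_size Ps) size_map size_enum_ord.
have := allP gen_check _ Sgen; rewrite /goodS Hall.
have -> : 8 <= count (fun l => all (fun k => farI k l) s) (iota 0 20).
  rewrite -size_filter.
  have Hsz : size r0 = 8 by rewrite size_map size_enum_ord.
  rewrite -{1}Hsz.
  apply: uniq_leq_size => // l /mapP[j _ ->].
  rewrite mem_filter mem_iota /= Lri andbT.
  rewrite (perm_all _ Ps); apply/allP => a /mapP[i _ ->]; exact: Fr.
move=> /= /eqP Es.
have Ht0 : perm_eq t0 target by rewrite -Es perm_sym.
split.
  move=> i; rewrite -Eti.
  have : ti i \in target by rewrite -(perm_mem Ht0); apply: map_f; rewrite mem_enum.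
  exact: (allP target_T).
move=> j; rewrite -Eri.
have Hj : ri j \in iota 0 20 by rewrite mem_iota /= Lri.
apply: (implyP (allP target_R (ri j) Hj)).
rewrite -(perm_all _ Ht0); apply/allP => a /mapP[i _ ->]; exact: Fr.
Qed.
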